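(* Let $(E,\mathcal L)$ be a local representation over an infinite set $B$, and let $\gamma_B:E\to{}^*B$ be the map $e\mapsto$ (class modulo $\mathcal L$ of $\psi\mapsto\psi_e$), where ${}^*B$ is taken in the nonstandard analysis induced by $(E,\mathcal L)$. The following are equivalent: (i) there exists a nonstandard analysis whose induced local representation on $B$ is isomorphic to $(E,\mathcal L)$; (ii) the nonstandard analysis induced by $(E,\mathcal L)$ induces on $B$ a local representation isomorphic to $(E,\mathcal L)$. When these hold, $\gamma_B$ is such an isomorphism.
   Context: A nonstandard analysis is a functor ${}^*:\mathbf{Set}\to\mathbf{Set}$ (images ${}^*A$, ${}^*f$) which (i) maps the full subcategory $\mathbf{Fin}$ of finite sets into itself as a self-equivalence and (ii) preserves finite products and equalizers; thus ${}^*(A_1\times\dots\times A_n)={}^*A_1\times\dots\times{}^*A_n$ and for $R\subseteq A_1\times\dots\times A_n$, ${}^*R\subseteq{}^*A_1\times\dots\times{}^*A_n$. For sets $B,E$, the cylinder Boolean algebra of $B^E$ consists of the subsets $\{\psi\in B^E:(\psi_{e_1},\dots,\psi_{e_n})\in R\}$ with $e_i\in E$, $R\subseteq B^n$. A local representation over $B$ is a pair $(E,\mathcal L)$ with $\mathcal L$ an ultrafilter on the cylinder Boolean algebra of $B^E$; $R\subseteq B^n$ ${}^*$-holds for $(e_1,\dots,e_n)\in E^n$ if $\{\psi:(\psi_{e_1},\dots,\psi_{e_n})\in R\}\in\mathcal L$. An isomorphism of local representations over $B$ is a bijection $\theta:E\to E'$ such that $R$ ${}^*$-holds for $(e_1,\dots,e_n)$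 iff it ${}^*$-holds for $(\theta e_1,\dots,\theta e_n)$, for all $n$, $e_i$, $R$. A nonstandard analysis induces on $B$ the local representation $E={}^*B$ in which $R$ ${}^*$-holds for $(e_1,\dots,e_n)$ iff $(e_1,\dots,e_n)\in{}^*R$. The nonstandard analysis induced by $(E,\mathcal L)$: ${}^*X$ is the set of maps $B^E\to X$ depending on finitely many coordinates, modulo equality on a member of $\mathcal L$; ${}^*g([\phi])=[g\circ\phi]$. A local representation satisfying (i)/(ii) is called rectified. *)

(* Defs.v *)
From mathcomp Require Import all_boot.
From Stdlib Require Import ClassicalEpsilon.


Definition finite_type (A : Type) : Prop :=
  exists n (f : 'I_n -> A), bijective f.

Record PreFunctor := {
  pobj : Type -> Type;
  pmap : forall A B : Type, (A -> B) -> pobj A -> pobj B }.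

Arguments pmap p [A B] f x.

Definition functor_laws (F : PreFunctor) : Prop :=
  (forall A (x : pobj F A), pmap F (fun a : A => a) x = x) /\
  (forall A B C (f : A -> B) (g : B -> C) (x : pobj F A),
      pmap F (fun a => g (f a)) x = pmap F g (pmap F f x)).

Definition fin_self_equivalence (F : PreFunctor) : Prop :=
  (forall A, finite_type A -> finite_type (pobj F A)) /\
  (forall A B, finite_type A -> finite_type B ->
      bijective (fun f : A -> B => pmap F f)) /\
  (forall C, finite_type C ->
      exists A, finite_type A /\ exists f : pobj F A -> C, bijective f).

(* (ii) preservation of finite products: the canonical comparison map
   *(prod_i A_i) -> prod_i *(A_i) is bijective (n = 0: terminal object) *)
Definition preserves_finite_products (F : PreFunctor) : Prop :=
  forall n (A : 'I_n -> Type),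
    bijective (fun x : pobj F (forall i, A i) =>
                 fun i => pmap F (fun f : (forall j, A j) => f i) x).

Definition preserves_equalizers (F : PreFunctor) : Prop :=
  forall A B (f g : A -> B),
    injective (pmap F (@proj1_sig A (fun a => f a = g a))) /\
    forall x : pobj F A,
      (exists y, pmap F (@proj1_sig A (fun a => f a = g a)) y = x)
      <-> pmap F f x = pmap F g x.

Record NonstandardAnalysis := {
  nsa_F :> PreFunctor;
  nsa_functor : functor_laws nsa_F;
  nsa_fin : fin_self_equivalence nsa_F;
  nsa_prod : preserves_finite_products nsa_F;
  nsa_eq : preserves_equalizers nsa_F }.

(* Local representation induced on B by a functor F: E = *B, and
   R ⊆ B^n *-holds for (x_1,..,x_n) iff (x_1,..,x_n) ∈ *R, where *R is
   viewed inside ( *B)^n via *(incl) followed by the comparison map. *)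
Definition functor_holds (F : PreFunctor) (B : Type) (n : nat)
    (R : ('I_n -> B) -> Prop) (x : 'I_n -> pobj F B) : Prop :=
  exists y : pobj F {v : 'I_n -> B | R v},
    forall i, pmap F (fun s : {v : 'I_n -> B | R v} => proj1_sig s i) y = x i.

Definition cylinder (B E : Type) (C : (E -> B) -> Prop) : Prop :=
  exists n (e : 'I_n -> E) (R : ('I_n -> B) -> Prop),
    forall psi, C psi <-> R (fun i => psi (e i)).

Definition cyl_ultrafilter (B E : Type) (L : ((E -> B) -> Prop) -> Prop) :=
  (forall C, L C -> cylinder B E C) /\
  L (fun _ => True) /\
  ~ L (fun _ => False) /\
  (forall C D, L C -> L D -> L (fun psi => C psi /\ D psi)) /\
  (forall C D, L C -> cylinder B E D -> (forall psi, C psi -> D psi) -> L D) /\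
  (forall C, cylinder B E C -> L C \/ L (fun psi => ~ C psi)).

Record LocalRep (B : Type) := {
  lr_E : Type;
  lr_L : ((lr_E -> B) -> Prop) -> Prop;
  lr_ultra : cyl_ultrafilter B lr_E lr_L }.

Definition lr_holds (B : Type) (LR : LocalRep B) (n : nat)
    (R : ('I_n -> B) -> Prop) (e : 'I_n -> lr_E B LR) : Prop :=
  @lr_L B LR (fun psi => R (fun i => psi (e i))).

Definition is_iso_to_functor_rep (B : Type) (LR : LocalRep B) (F : PreFunctor)
    (theta : lr_E B LR -> pobj F B) : Prop :=
  bijective theta /\
  forall n (R : ('I_n -> B) -> Prop) (e : 'I_n -> lr_E B LR),
    lr_holds B LR n R e <-> functor_holds F B n R (fun i => theta (e i)).

Definition iso_to_functor_rep (B : Type) (LR : LocalRep B) (F : PreFunctor) :=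
  exists theta, is_iso_to_functor_rep B LR F theta.

Section Induced.
Variables (B : Type) (LR : LocalRep B).
Let E := lr_E B LR.
Let L := @lr_L B LR.

Definition findep (X : Type) (phi : (E -> B) -> X) : Prop :=
  exists n (e : 'I_n -> E), forall psi psi',
    (forall i, psi (e i) = psi' (e i)) -> phi psi = phi psi'.

Definition eqL (X : Type) (phi phi' : (E -> B) -> X) : Prop :=
  exists C, L C /\ forall psi, C psi -> phi psi = phi' psi.

Definition cls (X : Type) (phi : (E -> B) -> X) : ((E -> B) -> X) -> Prop :=
  fun phi' => findep X phi' /\ eqL X phi phi'.

(* *X := finitely-dependent maps modulo L-equality (as equivalence classes) *)
Definition starT (X : Type) : Type :=
  {P : ((E -> B) -> X) -> Prop | exists phi, findep X phi /\ P = cls X phi}.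

Lemma findep_comp (X Y : Type) (g : X -> Y) (phi : (E -> B) -> X) :
  findep X phi -> findep Y (fun psi => g (phi psi)).
Proof.
move=> [n [e He]]; exists n, e => psi psi' H; by rewrite (He psi psi' H).
Qed.

Definition starClass (X : Type) (phi : (E -> B) -> X) (h : findep X phi) : starT X :=
  exist _ (cls X phi) (ex_intro _ phi (conj h erefl)).

Definition starRep (X : Type) (x : starT X) :=
  constructive_indefinite_description _ (proj2_sig x).

(* *g [phi] = [g o phi] *)
Definition starMap (X Y : Type) (g : X -> Y) (x : starT X) : starT Y :=
  let r := starRep X x in
  starClass Y _ (findep_comp X Y g _ (proj1 (proj2_sig r))).

Definition inducedNSA : PreFunctor :=
  {| pobj := starT; pmap := starMap |}.

Lemma findep_eval (e : E) : findep B (fun psi : E -> B => psi e).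
Proof.
exists 1, (fun _ => e) => psi psi' H; exact: (H ord0).
Qed.

Definition gammaB (e : E) : pobj inducedNSA B := starClass B _ (findep_eval e).

End Induced.

(* Main.v *)
Require Import Defs.
From mathcomp Require Import all_boot.
From Stdlib Require Import ClassicalEpsilon Classical FunctionalExtensionality PropExtensionality ProofIrrelevance.

Lemma inj_surj_bij {A C : Type} (g : A -> C) :
  injective g -> (forall y, exists x, g x = y) -> bijective g.
Proof.
move=> gi gs.
pose ginv y := proj1_sig (constructive_indefinite_description _ (gs y)).
exists ginv => [x|y]; last by rewrite /ginv; case: constructive_indefinite_description.
apply: gi; rewrite /ginv; by case: constructive_indefinite_description.
Qed.

Lemma sig_inj (A : Type) (P : A -> Prop) (s t : {a : A | P a}) :
  proj1_sig s = proj1_sig t -> s = t.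
Proof.
case: s => a ha; case: t => b hb /= Eab; subst b; by rewrite (proof_irrelevance _ ha hb).
Qed.

Definition ext (X : Type) n (v : 'I_n -> X) (x : X) : 'I_n.+1 -> X :=
  fun j => match unlift ord_max j with Some i => v i | None => x end.
Arguments ext {X n}.
Lemma ext_max X n (v : 'I_n -> X) x : ext v x ord_max = x.
Proof. by rewrite /ext unlift_none. Qed.
Lemma ext_lift X n (v : 'I_n -> X) x i : ext v x (lift ord_max i) = v i.
Proof. by rewrite /ext liftK. Qed.

Definition graph n (B : Type) (f : ('I_n -> B) -> B) : ('I_n.+1 -> B) -> Prop :=
  fun v => v ord_max = f (fun i => v (lift ord_max i)).
Arguments graph {n B}.

Definition merge (E : Type) n1 n2 (e1 : 'I_n1 -> E) (e2 : 'I_n2 -> E) : 'I_(n1 + n2) -> E :=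
  fun k => match split k with inl a => e1 a | inr b => e2 b end.
Arguments merge {E n1 n2}.

Section Proofs.
Variables (B : Type) (LR : LocalRep B).
Local Notation E := (lr_E B LR).
Local Notation L := (@lr_L B LR).

Lemma Lcyl C : L C -> cylinder B E C.
Proof. by case: (lr_ultra B LR) => H _; apply: H. Qed.
Lemma LT : L (fun _ => True).
Proof. by case: (lr_ultra B LR) => _ [H _]. Qed.
Lemma LnF : ~ L (fun _ => False).
Proof. by case: (lr_ultra B LR) => _ [_ [H _]]. Qed.
Lemma LI C D : L C -> L D -> L (fun psi => C psi /\ D psi).
Proof. by case: (lr_ultra B LR) => _ [_ [_ [H _]]]; apply: H. Qed.
Lemma Lup C D : L C -> cylinder B E D -> (forall psi, C psi -> D psi) -> L D.
Proof. by case: (lr_ultra B LR) => _ [_ [_ [_ [H _]]]]; apply: H. Qed.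
Lemma Lult C : cylinder B E C -> L C \/ L (fun psi => ~ C psi).
Proof. by case: (lr_ultra B LR) => _ [_ [_ [_ [_ H]]]]; apply: H. Qed.

Arguments Lcyl {C}. Arguments LI {C D}. Arguments Lup {C D}. Arguments Lult {C}. 
Lemma tup0 : 'I_0 -> E.
Proof. by case=> m; rewrite ltn0. Qed.

Lemma cylF : cylinder B E (fun _ => False).
Proof. by exists 0, tup0, (fun _ => False). Qed.

Lemma Lne {C} : L C -> exists psi, C psi.
Proof.
move=> LC; apply: NNPP => H; apply: LnF; apply: (Lup LC cylF) => psi Cp.
by apply: H; exists psi.
Qed.

Lemma cyl_tuple n (e : 'I_n -> E) (R : ('I_n -> B) -> Prop) :
  cylinder B E (fun psi => R (fun i => psi (e i))).
Proof. by exists n, e, R. Qed.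

Lemma L_bigcap {n} {P : 'I_n -> (E -> B) -> Prop} :
  (forall i, exists C, L C /\ forall psi, C psi -> P i psi) ->
  exists C, L C /\ forall psi, C psi -> forall i, P i psi.
Proof.
elim: n P => [|n IH] P H.
  exists (fun _ => True); split; first exact: LT.
  by move=> psi _ [m hm]; exfalso; by rewrite ltn0 in hm.
have [C1 [LC1 HC1]] := IH (fun i => P (lift ord_max i)) (fun i => H _).
have [C2 [LC2 HC2]] := H ord_max.
exists (fun psi => C1 psi /\ C2 psi); split; first exact: LI.
move=> psi [h1 h2] i; case: (unliftP ord_max i) => [j ->|->]; [exact: HC1| exact: HC2].
Qed.

Definition detby {n} (e : 'I_n -> E) (P : (E -> B) -> (E -> B) -> Prop) :=
  forall psi psi', (forall i, psi (e i) = psi' (e i)) -> P psi psi'.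

Lemma det_merge n1 n2 (e1 : 'I_n1 -> E) (e2 : 'I_n2 -> E) P1 P2 :
  detby e1 P1 -> detby e2 P2 ->
  detby (merge e1 e2) (fun psi psi' => P1 psi psi' /\ P2 psi psi').
Proof.
move=> H1 H2 psi psi' H; split.
  apply: H1 => i; have := H (lshift n2 i); by rewrite /merge (unsplitK (inl i)).
apply: H2 => i; have := H (rshift n1 i); by rewrite /merge (unsplitK (inr i)).
Qed.

Arguments det_merge {n1 n2 e1 e2 P1 P2}.
Lemma det_union k (P : 'I_k -> (E -> B) -> (E -> B) -> Prop) :
  (forall i, exists n (e : 'I_n -> E), detby e (P i)) ->
  exists n (e : 'I_n -> E), detby e (fun psi psi' => forall i, P i psi psi').
Proof.
elim: k P => [|k IH] P H.
  by exists 0, tup0 => psi psi' _ [m hm]; exfalso; by rewrite ltn0 in hm.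
have [n1 [e1 H1]] := IH (fun i => P (lift ord_max i)) (fun i => H _).
have [n2 [e2 H2]] := H ord_max.
exists (n1 + n2), (merge e1 e2) => psi psi' Hag i.
have [h1 h2] := det_merge H1 H2 _ _ Hag.
case: (unliftP ord_max i) => [j ->|->]; [exact: h1| exact: h2].
Qed.

Lemma findep_dep n (A : 'I_n -> Type) (phi : forall i, (E -> B) -> A i) :
  (forall i, findep B LR (A i) (phi i)) ->
  findep B LR (forall i, A i) (fun psi i => phi i psi).
Proof.
move=> H.
have [m [e He]] := det_union n (fun i psi psi' => phi i psi = phi i psi') H.
exists m, e => psi psi' Hag; apply: functional_extensionality_dep => i; exact: He.
Qed.


Lemma eqL_refl {X} (phi : (E -> B) -> X) : eqL B LR X phi phi.
Proof. exists (fun _ => True); split; [exact: LT| by []]. Qed.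
Lemma eqL_sym {X} {phi phi' : (E -> B) -> X} : eqL B LR X phi phi' -> eqL B LR X phi' phi.
Proof. move=> [C [LC HC]]; exists C; split=> // psi /HC ->. done. Qed.
Lemma eqL_trans {X} {p1 p2 p3 : (E -> B) -> X} :
  eqL B LR X p1 p2 -> eqL B LR X p2 p3 -> eqL B LR X p1 p3.
Proof.
move=> [C [LC HC]] [D [LD HD]]; exists (fun psi => C psi /\ D psi); split; first exact: LI.
by move=> psi [/HC -> /HD ->].
Qed.
Lemma eqL_comp {X Y} (g : X -> Y) {p1 p2 : (E -> B) -> X} :
  eqL B LR X p1 p2 -> eqL B LR Y (fun psi => g (p1 psi)) (fun psi => g (p2 psi)).
Proof. move=> [C [LC HC]]; exists C; split=> // psi /HC ->; done. Qed.

Lemma cls_eq {X} {p1 p2 : (E -> B) -> X} : eqL B LR X p1 p2 -> cls B LR X p1 = cls B LR X p2.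
Proof.
move=> H; apply: functional_extensionality => c; apply: propositional_extensionality.
split=> [[h1 h2]|[h1 h2]]; split=> //.
  exact: eqL_trans (eqL_sym H) h2.
exact: eqL_trans H h2.
Qed.

Lemma cls_eqL {X} {p1 p2 : (E -> B) -> X} : findep B LR X p2 ->
  cls B LR X p1 = cls B LR X p2 -> eqL B LR X p1 p2.
Proof.
move=> h2 Ec; have : cls B LR X p2 p2 by split; [done| exact: eqL_refl].
by rewrite -Ec => -[].
Qed.

Lemma starT_eq X (x y : starT B LR X) : proj1_sig x = proj1_sig y -> x = y.
Proof. exact: sig_inj. Qed.

Lemma starClass_eq {X} {p1 p2 : (E -> B) -> X} {h1 h2} : eqL B LR X p1 p2 ->
  starClass B LR X p1 h1 = starClass B LR X p2 h2.
Proof. by move=> H; apply: starT_eq => /=; apply: cls_eq. Qed.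

Lemma starClass_inj {X} {p1 p2 : (E -> B) -> X} {h1 h2} :
  starClass B LR X p1 h1 = starClass B LR X p2 h2 -> eqL B LR X p1 p2.
Proof. by move=> /(f_equal (@proj1_sig _ _)) /=; apply: cls_eqL. Qed.

Lemma starClass_rep X (x : starT B LR X) :
  starClass B LR X (sval (starRep B LR X x)) (proj1 (proj2_sig (starRep B LR X x))) = x.
Proof. apply: starT_eq => /=; exact: (esym (proj2 (proj2_sig (starRep B LR X x)))). Qed.

Lemma starT_ind {X} (x : starT B LR X) : exists phi h, x = starClass B LR X phi h.
Proof. by exists (sval (starRep B LR X x)), (proj1 (proj2_sig (starRep B LR X x))); rewrite starClass_rep. Qed.

Lemma starMap_class X Y (g : X -> Y) (phi : (E -> B) -> X) h :
  starMap B LR X Y g (starClass B LR X phi h) =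
  starClass B LR Y (fun psi => g (phi psi)) (findep_comp B LR X Y g phi h).
Proof.
rewrite /starMap; apply: starClass_eq; apply: eqL_comp.
case: (proj2_sig (starRep B LR X (starClass B LR X phi h))) => hr Er.
by apply: eqL_sym; apply: cls_eqL.
Qed.

Lemma gamma_holds n (R : ('I_n -> B) -> Prop) (e : 'I_n -> E) :
  lr_holds B LR n R e <->
  functor_holds (inducedNSA B LR) B n R (fun i => gammaB B LR (e i)).
Proof.
split.
- move=> H; have [psi0 H0] := Lne H.
  pose g (v : 'I_n -> B) : {v | R v} :=
    match excluded_middle_informative (R v) with
    | left h => exist _ v h | right _ => exist _ _ H0 end.
  pose phi psi := g (fun i => psi (e i)).
  have hphi : findep B LR _ phi.
    exists n, e => psi psi' Hag; rewrite /phi; f_equal.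
    exact: functional_extensionality.
  exists (starClass B LR _ phi hphi) => i /=.
  rewrite starMap_class /gammaB; apply: starClass_eq.
  exists (fun psi => R (fun i => psi (e i))); split=> // psi Hp.
  rewrite /phi /g; by case: excluded_middle_informative.
- move=> [y Hy]; have [phi [h Ey]] := starT_ind y; subst y.
  have H : forall i, exists C, L C /\ forall psi, C psi ->
        proj1_sig (phi psi) i = psi (e i).
    move=> i; have := Hy i => /=; rewrite starMap_class /gammaB => /starClass_inj.
    by [].
  have [C [LC HC]] := L_bigcap H.
  apply: (Lup LC (cyl_tuple _ e R)) => psi Hp.
  have -> : (fun i => psi (e i)) = proj1_sig (phi psi).
    by apply: functional_extensionality => i; rewrite HC.
  exact: proj2_sig.
Qed.


Lemma lr_graph n (f : ('I_n -> B) -> B) (e : 'I_n -> E) e' :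
  lr_holds B LR n.+1 (graph f) (ext e e') <->
  L (fun psi => psi e' = f (fun i => psi (e i))).
Proof.
rewrite /lr_holds.
have -> : (fun psi : E -> B => graph f (fun i => psi (ext e e' i))) =
          (fun psi => psi e' = f (fun i => psi (e i))).
  apply: functional_extensionality => psi; rewrite /graph ext_max; f_equal; f_equal.
  by apply: functional_extensionality => i; rewrite ext_lift.
done.
Qed.

Lemma rect_graph (N : NonstandardAnalysis) theta :
  is_iso_to_functor_rep B LR N theta ->
  forall n (f : ('I_n -> B) -> B) (e : 'I_n -> E),
  exists e', L (fun psi => psi e' = f (fun i => psi (e i))).
Proof.
move=> [[thinv th1 th2] Hiso] n f e.
have [_ Hcomp] := nsa_functor N.
have [cinv c1 c2] := nsa_prod N n (fun _ => B).
pose z := cinv (fun i => theta (e i)).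
have Hz : forall i, Defs.pmap N (fun g : 'I_n -> B => g i) z = theta (e i).
  move=> i; exact: (f_equal (fun F => F i) (c2 (fun i => theta (e i)))).
pose G := {v : 'I_n.+1 -> B | graph f v}.
have hG : forall v, graph f (ext v (f v)).
  move=> v; rewrite /graph ext_max; f_equal.
  by apply: functional_extensionality => i; rewrite ext_lift.
pose h (v : 'I_n -> B) : G := exist _ (ext v (f v)) (hG v).
pose y := Defs.pmap N h z.
pose x := Defs.pmap N (fun s : G => proj1_sig s ord_max) y.
exists (thinv x).
apply/(lr_graph n f e (thinv x)); apply/(Hiso n.+1 (graph f) (ext e (thinv x))).
exists y => j; rewrite /y -Hcomp.
case: (unliftP ord_max j) => [i ->|->].
- rewrite ext_lift -Hz; f_equal.
  by apply: functional_extensionality => v /=; rewrite ext_lift.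
- by rewrite ext_max th2 /x /y -Hcomp.
Qed.

Definition has_iso := exists (N : NonstandardAnalysis) theta,
  is_iso_to_functor_rep B LR N theta.

Lemma gamma_inj : has_iso -> injective (gammaB B LR).
Proof.
move=> [N [theta Hth]] e1 e2 /starClass_inj [C [LC HC]].
have L12 : lr_holds B LR 1.+1 (graph (fun v : 'I_1 -> B => v ord0)) (ext (fun _ => e1) e2).
  apply: (Lup LC (cyl_tuple _ _ _)) => psi /HC H /=.
  by rewrite /graph /= ext_max ext_lift H.
case: Hth => [[thinv th1 th2] Hiso].
have [y Hy] := (proj1 (Hiso _ _ _) L12).
have H1 := Hy ord_max; have H2 := Hy (lift ord_max ord0).
rewrite ext_max in H1; rewrite ext_lift in H2.
apply: (can_inj th1); rewrite -H1 -H2; f_equal.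
by apply: functional_extensionality => -[v hv].
Qed.

Lemma gamma_surj : has_iso -> inhabited B ->
  forall x, exists e, gammaB B LR e = x.
Proof.
move=> [N [theta Hth]] [b0] x.
have [phi [h ->]] := starT_ind x.
have hh := h; case: hh => n [e He].
have inh : inhabited (E -> B) by constructor; exact: (fun _ => b0).
pose f (v : 'I_n -> B) := phi (epsilon inh (fun psi => forall i, psi (e i) = v i)).
have Hf : forall psi, f (fun i => psi (e i)) = phi psi.
  move=> psi; apply: He => i.
  have := epsilon_spec inh (fun psi' => forall i, psi' (e i) = psi (e i))
                      (ex_intro _ psi (fun _ => erefl)).
  by move=> H; exact: H i.
have [e' He'] := rect_graph N theta Hth n f e.
exists e'; apply: starClass_eq; exists (fun psi : E -> B => psi e' = f (fun i => psi (e i))); split; first exact: He'.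
by move=> psi ->; exact: Hf.
Qed.

Lemma gamma_iso : has_iso -> inhabited B ->
  is_iso_to_functor_rep B LR (inducedNSA B LR) (gammaB B LR).
Proof.
move=> H hB; split; last exact: gamma_holds.
apply: inj_surj_bij; [exact: gamma_inj | exact: gamma_surj].
Qed.


Local Notation F := (inducedNSA B LR).

Lemma ind_functor : functor_laws F.
Proof.
split.
- move=> A x /=; have [phi [h ->]] := starT_ind x.
  rewrite starMap_class; apply: starClass_eq; exact: eqL_refl.
- move=> A1 A2 A3 f g x /=; have [phi [h ->]] := starT_ind x.
  rewrite !starMap_class; apply: starClass_eq; exact: eqL_refl.
Qed.

Lemma findep_cst {X} (a : X) : findep B LR X (fun _ => a).
Proof. by exists 0, tup0. Qed.

Definition cst {X} (a : X) : starT B LR X := starClass B LR X (fun _ => a) (findep_cst a).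

Lemma cst_inj X : injective (@cst X).
Proof.
move=> a b /starClass_inj [C [LC HC]]; have [psi Hp] := Lne LC; exact: HC psi Hp.
Qed.

Lemma starMap_cst X Y (g : X -> Y) a : starMap B LR X Y g (cst a) = cst (g a).
Proof. rewrite /cst starMap_class; apply: starClass_eq; exact: eqL_refl. Qed.

Lemma cyl_of_findep X (phi : (E -> B) -> X) (Q : X -> Prop) :
  findep B LR X phi -> cylinder B E (fun psi => Q (phi psi)).
Proof.
move=> [n [e He]]; exists n, e, (fun v => exists psi', (forall i, psi' (e i) = v i) /\ Q (phi psi')).
move=> psi; split; first by move=> H; exists psi.
by move=> [psi' [H1 H2]]; rewrite (He psi psi' (fun i => esym (H1 i))).
Qed.

Lemma fin_cst {X} : finite_type X -> forall x : starT B LR X, exists a, cst a = x.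
Proof.
move=> [m [f [finv f1 f2]]] x; have [phi [h ->]] := starT_ind x.
have [i Hi] : exists i, L (fun psi => phi psi = f i).
  apply: NNPP => Hno.
  have H : forall i : 'I_m, exists C, L C /\ forall psi, C psi -> phi psi <> f i.
    move=> i; case: (Lult (cyl_of_findep _ _ (fun a => a = f i) h)) => Hc.
      by exfalso; apply: Hno; exists i.
    by exists (fun psi => ~ phi psi = f i); split.
  have [C [LC HC]] := L_bigcap H; have [psi Hp] := Lne LC.
  exact: (HC psi Hp (finv (phi psi)) (esym (f2 _))).
exists (f i); apply: starClass_eq; exists (fun psi => phi psi = f i); split=> //.
Qed.

Lemma cst_bij {X} : finite_type X -> bijective (@cst X).
Proof.
move=> hX; apply: inj_surj_bij; [exact: cst_inj| exact: fin_cst].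
Qed.

Lemma ind_fin : fin_self_equivalence F.
Proof.
split; [|split].
- move=> X hX /=; have [m [f bf]] := hX; exists m, (fun i => cst (f i)).
  apply: inj_surj_bij.
    by move=> i j H; apply: (bij_inj bf); apply: cst_inj; exact: H.
  move=> x; have [a <-] := fin_cst hX x; have [finv _ f2] := bf.
  by exists (finv a); rewrite f2.
- move=> A1 A2 h1 h2; apply: inj_surj_bij.
    move=> f g Hfg; apply: functional_extensionality => a; apply: cst_inj.
    rewrite -!starMap_cst; exact: (f_equal (fun G => G (cst a)) Hfg).
  move=> G.
  pose g a := proj1_sig (constructive_indefinite_description _ (fin_cst h2 (G (cst a)))).
  exists g; apply: functional_extensionality => x /=.
  have [a <-] := fin_cst h1 x; rewrite starMap_cst /g.
  by case: constructive_indefinite_description.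
- move=> C hC; exists C; split=> //.
  have [g c1 c2] := cst_bij hC.
  by exists g; exists (@cst C).
Qed.

Lemma ind_prod : preserves_finite_products F.
Proof.
move=> n A; apply: inj_surj_bij.
- move=> x y; have [phi [h ->]] := starT_ind x; have [phi' [h' ->]] := starT_ind y.
  move=> /= H.
  have Hi : forall i, exists C, L C /\ forall psi, C psi -> phi psi i = phi' psi i.
    move=> i; have := f_equal (fun G => G i) H => /=; rewrite !starMap_class.
    by move/starClass_inj.
  have [C [LC HC]] := L_bigcap Hi.
  apply: starClass_eq; exists C; split=> // psi Hp.
  apply: functional_extensionality_dep => i; exact: HC.
- move=> y.
  pose r i := sval (starRep B LR (A i) (y i)).
  have hr : forall i, findep B LR (A i) (r i).
    move=> i; exact: (proj1 (proj2_sig (starRep B LR (A i) (y i)))).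
  exists (starClass B LR _ _ (findep_dep _ _ _ hr)).
  apply: functional_extensionality_dep => i /=; rewrite starMap_class.
  apply: (eq_trans _ (starClass_rep (A i) (y i))); apply: starClass_eq; exact: eqL_refl.
Qed.

Lemma ind_eq : preserves_equalizers F.
Proof.
move=> A1 A2 f g; split.
- move=> x y; have [phi [h ->]] := starT_ind x; have [phi' [h' ->]] := starT_ind y.
  rewrite /= !starMap_class => /starClass_inj [C [LC HC]].
  apply: starClass_eq; exists C; split=> // psi /HC; exact: sig_inj.
- move=> x; split.
  + move=> [y <-]; have [phi [h ->]] := starT_ind y.
    rewrite /= !starMap_class; apply: starClass_eq.
    exists (fun _ => True); split; first exact: LT.
    by move=> psi _; exact: (proj2_sig (phi psi)).
  + have [phi [h ->]] := starT_ind x.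
    rewrite /= !starMap_class => /starClass_inj [C [LC HC]].
    have [psi0 H0] := Lne LC.
    have [m [ec [Rc Hc]]] := Lcyl LC.
    pose s psi : {a | f a = g a} :=
      match excluded_middle_informative (C psi) with
      | left hC => exist _ (phi psi) (HC psi hC)
      | right _ => exist _ (phi psi0) (HC psi0 H0) end.
    have hs : findep B LR _ s.
      have [n1 [e1 He1]] := h.
      have Hd : detby ec (fun psi psi' => C psi <-> C psi').
        move=> psi psi' Hag; rewrite !Hc.
        have -> : (fun i => psi (ec i)) = (fun i => psi' (ec i)) by apply: functional_extensionality.
        done.
      exists (n1 + m), (merge e1 ec) => psi psi' Hag.
      have [E1 E2] := det_merge He1 Hd _ _ Hag.
      rewrite /s; case: excluded_middle_informative => c1;
        case: excluded_middle_informative => c2; apply: sig_inj => //=.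
      * by exfalso; apply: c2; apply/E2.
      * by exfalso; apply: c1; apply/E2.
    exists (starClass B LR _ s hs); rewrite /= starMap_class.
    apply: starClass_eq; exists C; split=> // psi Hp.
    by rewrite /s; case: excluded_middle_informative.
Qed.

End Proofs.

Lemma inf_inhabited (B : Type) : ~ finite_type B -> inhabited B.
Proof.
move=> Hinf; apply: NNPP => Hne; apply: Hinf.
have f0 : 'I_0 -> B by case=> m hm; exfalso; by rewrite ltn0 in hm.
exists 0, f0.
have g0 : B -> 'I_0 by move=> b; exfalso; exact: (Hne (inhabits b)).
exists g0.
  by case=> m hm; exfalso; rewrite ltn0 in hm.
by move=> b; exfalso; exact: (Hne (inhabits b)).
Qed.

Definition inducedNSA_NSA (B : Type) (LR : LocalRep B) : NonstandardAnalysis :=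
  {| nsa_F := inducedNSA B LR; nsa_functor := ind_functor B LR;
     nsa_fin := ind_fin B LR; nsa_prod := ind_prod B LR; nsa_eq := ind_eq B LR |}.

Theorem mainTheorem4 (B : Type) (LR : LocalRep B) :
  ~ finite_type B ->
  ((exists N : NonstandardAnalysis, iso_to_functor_rep B LR N)
     <-> iso_to_functor_rep B LR (inducedNSA B LR)) /\
  (iso_to_functor_rep B LR (inducedNSA B LR) ->
     is_iso_to_functor_rep B LR (inducedNSA B LR) (gammaB B LR)).
Proof.
move=> Hinf; have hB := inf_inhabited B Hinf.
split; [split|].
- move=> [N [th Hth]]; exists (gammaB B LR); apply: gamma_iso => //.
  by exists N, th.
- move=> H; by exists (inducedNSA_NSA B LR).
- move=> [th Hth]; apply: gamma_iso => //.
  by exists (inducedNSA_NSA B LR), th.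
Qed.
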